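(* There is a uniform constant $L>0$ such that for all $m,n\in\mathbb N$ the diagonal operator \[D(m,n):\mathbb C^{\mathcal M(m,n),s}\to\mathbb C^{\mathcal J(m,n)},\qquad (a_{\mathbf i})_{\mathbf i\in\mathcal M(m,n)}\mapsto\big(\operatorname{card}[\mathbf j]^{\frac{m+1}{2m}}a_{\mathbf j}\big)_{\mathbf j\in\mathcal J(m,n)}\] satisfies \[\big\|D(m,n):\ell^s_{\frac{2m}{m+1},1}(\mathcal M(m,n))\to\ell_{\frac{2m}{m+1},1}(\mathcal J(m,n))\big\|\le L\,m.\]
   Context: $\mathcal M(m,n)=\{(i_1,\dots,i_m):1\le i_k\le n\}$, $\mathcal J(m,n)=\{\mathbf j\in\mathcal M(m,n):j_1\le\dots\le j_m\}$. For $\mathbf i\in\mathcal M(m,n)$, $[\mathbf i]$ is the set of all $\mathbf j$ obtained from $\mathbf i$ by permuting its coordinates. $\mathbb C^{\mathcal M(m,n),s}$ is the space of symmetric matrices, i.e. $a_{\mathbf i}=a_{\mathbf j}$ whenever $\mathbf j\in[\mathbf i]$. For finite $I$ and $1<p<\infty$, $\|x\|_{\ell_{p,1}(I)}=\sum_kx_k^*(k^{1/p}-(k-1)^{1/p})$, $x^*$ the non-increasing rearrangement of $(|x_i|)$; $\ell^s_{p,1}(\mathcal M(m,n))$ denotes $\mathbb C^{\mathcal M(m,n),s}$ with the norm of $\ell_{p,1}(\mathcal M(m,n))$. *)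

(* Defs.v *)
From mathcomp Require Import all_boot all_order all_algebra.
From mathcomp Require Import all_classical all_reals all_analysis.
From mathcomp Require Export complex.
Set Implicit Arguments. Unset Strict Implicit. Unset Printing Implicit Defensive.
Import Order.TTheory GRing.Theory Num.Theory.
Local Open Scope ring_scope.

(* M(m,n): multi-indices (i_1,...,i_m) with entries in {1..n}, here 'I_n = {0..n-1} *)
Definition Mind (m n : nat) : finType := m.-tuple 'I_n.

Definition in_J (m n : nat) (j : Mind m n) : bool := sorted leq (map val (val j)).

Definition eqclass (m n : nat) (i : Mind m n) : {set Mind m n} :=
  [set j : Mind m n | perm_eq (val j) (val i)].

Definition symmetric_mat (R : realType) (m n : nat) (a : Mind m n -> R[i]) : Prop :=
  forall i j : Mind m n, j \in eqclass i -> a i = a j.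

Definition cmod (R : realType) (z : R[i]) : R := complex.Re `|z|.

Definition decr_rearr (R : realType) (s : seq R) : seq R := sort (fun x y => y <= x) s.

Definition lorentz_p1 (R : realType) (p : R) (s : seq R) : R :=
  let xs := decr_rearr s in
  \sum_(k < size xs) nth 0 xs k * (k.+1%:R `^ p^-1 - k%:R `^ p^-1).

Definition normM (R : realType) (p : R) (m n : nat) (a : Mind m n -> R[i]) : R :=
  lorentz_p1 p [seq cmod (a i) | i <- enum (Mind m n)].

Definition normDJ (R : realType) (p : R) (m n : nat) (a : Mind m n -> R[i]) : R :=
  lorentz_p1 p [seq (#|eqclass j|%:R `^ ((m.+1)%:R / (2 * m)%:R)) * cmod (a j)
               | j <- enum (Mind m n) & in_J j].

(* Main.v *)
Require Import Defs.
From mathcomp Require Import all_boot all_order all_algebra all_fingroup.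
From mathcomp Require Import all_classical all_reals all_analysis.
From mathcomp Require Import complex.
From mathcomp Require Import ring lra zify.
Import Order.TTheory GRing.Theory Num.Theory.
Local Open Scope ring_scope.

Section Dot.
Variable R : realType.

Fixpoint dotW (W : nat -> R) (z : seq R) : R :=
  if z is x :: z' then x * W 0%N + dotW (fun k => W k.+1) z' else 0.

Lemma dotW_cat W s1 s2 :
  dotW W (s1 ++ s2) = dotW W s1 + dotW (fun k => W (size s1 + k)%N) s2.
Proof.
elim: s1 W => [|x s1 IH] W /=; first by rewrite add0r.
by rewrite IH addrA.
Qed.

Lemma dotW_sum (W : nat -> R) (z : seq R) : \sum_(k < size z) z`_k * W k = dotW W z.
Proof.
elim: z W => [|x z IH] W /=; first by rewrite big_ord0.
by rewrite big_ord_recl /= -IH.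
Qed.

Lemma dotW_map_add W (X : Type) (f g : X -> R) e :
  dotW W (map (fun x => f x + g x) e) = dotW W (map f e) + dotW W (map g e).
Proof.
elim: e W => [|x e IH] W /=; first by rewrite addr0.
rewrite IH mulrDl; ring.
Qed.

Lemma dotW_map_scale W (X : Type) (t : R) (f : X -> R) e :
  dotW W (map (fun x => t * f x) e) = t * dotW W (map f e).
Proof.
elim: e W => [|x e IH] W /=; first by rewrite mulr0.
rewrite IH; ring.
Qed.

Lemma dotW_map_le W (X : Type) (f g : X -> R) e :
  (forall k, 0 <= W k) -> (forall x, f x <= g x) ->
  dotW W (map f e) <= dotW W (map g e).
Proof.
move=> hW hfg; elim: e W hW => [|x e IH] W hW //=.
apply: lerD; last by apply: IH.
by apply: ler_wpM2r.
Qed.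

Lemma dotW_ge0 W z : (forall k, 0 <= W k) -> all (fun x => 0 <= x) z -> 0 <= dotW W z.
Proof.
elim: z W => [|x z IH] W hW //= /andP[hx hz].
by apply: addr_ge0; [apply: mulr_ge0 | apply: IH].
Qed.

Definition ge : rel R := fun x y => y <= x.
Lemma ge_total : total ge. Proof. by move=> x y; rewrite /ge orbC le_total. Qed.
Lemma ge_trans : transitive ge. Proof. by move=> y x z h1 h2; exact: (le_trans h2 h1). Qed.
Lemma ge_anti : antisymmetric ge.
Proof. move=> x y /andP[h1 h2]; apply/eqP; rewrite eq_le; apply/andP; split; [exact: h2 | exact: h1]. Qed.

Lemma decr_le0 (W : nat -> R) : (forall k, W k.+1 <= W k) -> forall i, W i <= W 0%N.
Proof. by move=> hW; elim=> [|i IH] //; apply: le_trans (hW i) IH. Qed.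

Lemma rearr n : forall (W : nat -> R) (z y : seq R), size z = n ->
  (forall k, W k.+1 <= W k) -> perm_eq z y -> sorted ge y -> dotW W z <= dotW W y.
Proof.
elim: n => [|n IH] W [|x z'] y //= hz hW.
- by move=> /perm_size; case: y.
- case: y => [|M y'] hp hs; first by have := perm_size hp.
  have hMall : all (ge M) y' := order_path_min ge_trans hs.
  have hsy' : sorted ge y' := path_sorted hs.
  have hxM : x <= M.
    have : x \in M :: y' by rewrite -(perm_mem hp) mem_head.
    rewrite inE => /orP[/eqP -> //|hx].
    by have := allP hMall x hx.
  have hW' : forall k, W k.+2 <= W k.+1 by move=> k; apply: hW.
  case: (eqVneq x M) => [hxeq|hxM'].
    rewrite /= hxeq lerD2l; apply: IH => //; first by case: hz.
    by rewrite -(perm_cons M) -{1}hxeq.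
  have : M \in z'.
    have : M \in x :: z' by rewrite (perm_mem hp) mem_head.
    by rewrite inE eq_sym (negbTE hxM').
  move=> hM; move: hz hp; case/splitPr: hM => z1 z2 hz hp.
  apply: (@le_trans _ _ (dotW W (M :: z1 ++ x :: z2))).
    rewrite /= !dotW_cat /=.
    have hWi := @decr_le0 W hW (size z1 + 0).+1.
    have h1 : 0 <= (M - x) * (W 0%N - W (size z1 + 0).+1).
      by apply: mulr_ge0; rewrite subr_ge0.
    set A := dotW _ z1; set B := dotW _ z2.
    set Wi := W (size z1 + 0).+1 in hWi h1 *.
    have e : M * W 0%N + (A + (x * Wi + B)) - (x * W 0%N + (A + (M * Wi + B)))
       = (M - x) * (W 0%N - Wi) by ring.
    by rewrite -subr_ge0 e.
  rewrite /= lerD2l; apply: IH => //.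
    by move/eqP: hz; rewrite eqSS !size_cat /= => /eqP.
  rewrite -(perm_cons M); apply: perm_trans hp.
  apply/seq.permP => a /=; rewrite !count_cat /=; lia.
Qed.

Lemma dotW_le_sort W z : (forall k, W k.+1 <= W k) -> dotW W z <= dotW W (sort ge z).
Proof.
move=> hW; apply: (@rearr (size z) W z (sort ge z) erefl hW _ (sort_sorted ge_total z)).
by rewrite perm_sym perm_sort.
Qed.

Definition Lam W (X : Type) (r : seq X) (f : X -> R) := dotW W (sort ge (map f r)).
Arguments Lam W {X} r f.

Lemma Lam_sorted W (X : Type) (r : seq X) (f : X -> R) (phi : R -> R) :
  {homo phi : x y / x <= y} ->
  Lam W r (fun x => phi (f x)) = dotW W (map (fun x => phi (f x)) (sort (relpre f ge) r)).
Proof.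
move=> hphi; rewrite /Lam; congr dotW.
have -> : map (fun x => phi (f x)) (sort (relpre f ge) r) = map phi (sort ge (map f r)).
  by rewrite sort_map -map_comp.
apply: (sorted_eq ge_trans ge_anti).
- exact: sort_sorted ge_total _.
- apply: (homo_sorted (e := ge)); first by move=> a b; apply: hphi.
  exact: sort_sorted ge_total _.
- rewrite perm_sort (map_comp phi f); apply: perm_map.
  by rewrite perm_sym perm_sort.
Qed.

Lemma Lam_id W (X : Type) (r : seq X) (f : X -> R) :
  Lam W r f = dotW W (map f (sort (relpre f ge) r)).
Proof. exact: (@Lam_sorted W X r f id). Qed.

Lemma Lam_upper W (X : eqType) (r e : seq X) (g : X -> R) :
  (forall k, W k.+1 <= W k) -> perm_eq e r -> dotW W (map g e) <= Lam W r g.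
Proof.
move=> hW he; apply: (@rearr _ W _ (sort ge (map g r)) erefl hW _ (sort_sorted ge_total _)).
by rewrite perm_sym perm_sort perm_sym; apply: perm_map.
Qed.

Lemma Lam_eq_in W (X : eqType) (r : seq X) (f g : X -> R) :
  {in r, f =1 g} -> Lam W r f = Lam W r g.
Proof. by move=> h; rewrite /Lam ((@eq_in_map _ _ f g r).1 h). Qed.

Lemma Lam_add W (X : eqType) (r : seq X) (f g : X -> R) :
  (forall k, W k.+1 <= W k) ->
  Lam W r (fun x => f x + g x) <= Lam W r f + Lam W r g.
Proof.
move=> hW; rewrite Lam_id dotW_map_add.
by apply: lerD; apply: Lam_upper => //; rewrite perm_sort.
Qed.

Lemma Lam_scale W (X : eqType) (r : seq X) (t : R) (f : X -> R) :
  (forall k, W k.+1 <= W k) -> 0 <= t ->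
  Lam W r (fun x => t * f x) <= t * Lam W r f.
Proof.
move=> hW ht; rewrite Lam_id dotW_map_scale.
by apply: ler_wpM2l => //; apply: Lam_upper => //; rewrite perm_sort.
Qed.

Lemma Lam_mono W (X : eqType) (r : seq X) (f g : X -> R) :
  (forall k, W k.+1 <= W k) -> (forall k, 0 <= W k) -> (forall x, f x <= g x) ->
  Lam W r f <= Lam W r g.
Proof.
move=> hW hW0 hfg; rewrite Lam_id.
apply: le_trans (@dotW_map_le W X f g _ hW0 hfg) _.
by apply: Lam_upper => //; rewrite perm_sort.
Qed.

Lemma Lam_ge0 W (X : eqType) (r : seq X) (f : X -> R) :
  (forall k, 0 <= W k) -> (forall x, 0 <= f x) -> 0 <= Lam W r f.
Proof.
move=> hW hf; rewrite Lam_id; apply: dotW_ge0 => //.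
by apply/allP => v /mapP [x _ ->].
Qed.

Lemma dotW_zero W (z : seq R) : all (fun v => v == 0) z -> dotW W z = 0.
Proof.
elim: z W => [|v z IH] W //= /andP[/eqP -> hz].
by rewrite mul0r add0r IH.
Qed.

Lemma Lam_zero W (X : eqType) (r : seq X) : Lam W r (fun _ => 0) = 0.
Proof. by rewrite Lam_id dotW_zero //; apply/allP => v /mapP [x _ ->]. Qed.

Lemma Lam_sum W (X : eqType) (r : seq X) (S : nat) (h : nat -> X -> R) :
  (forall k, W k.+1 <= W k) ->
  Lam W r (fun x => \sum_(s < S) h s x) <= \sum_(s < S) Lam W r (h s).
Proof.
move=> hW; elim: S => [|S IH].
  rewrite big_ord0 (@Lam_eq_in W X r _ (fun _ => 0)) ?Lam_zero //.
  by move=> x _; rewrite big_ord0.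
rewrite big_ord_recr /=.
rewrite (@Lam_eq_in W X r _ (fun x => \sum_(s < S) h s x + h S x)); last first.
  by move=> x _; rewrite big_ord_recr.
apply: le_trans (@Lam_add W X r (fun x => \sum_(s < S) h s x) (h S) hW) _.
by apply: lerD.
Qed.

Lemma Lam_split W (X : Type) (r : seq X) (f : X -> R) (phi1 phi2 : R -> R) :
  {homo phi1 : x y / x <= y} -> {homo phi2 : x y / x <= y} ->
  (forall x, phi1 x + phi2 x = x) ->
  Lam W r f = Lam W r (fun x => phi1 (f x)) + Lam W r (fun x => phi2 (f x)).
Proof.
move=> h1 h2 h12; rewrite (@Lam_sorted W X r f phi1 h1) (@Lam_sorted W X r f phi2 h2) Lam_id.
rewrite -dotW_map_add; congr dotW; apply: eq_map => x; by rewrite h12.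
Qed.

Lemma dotW_01 W (z : seq R) : sorted ge z -> all (fun v => (v == 0) || (v == 1)) z ->
  dotW W z = \sum_(k < count (pred1 1) z) W k.
Proof.
elim: z W => [|v z IH] W //=; first by rewrite big_ord0.
move=> hs /andP[hv hz].
have hz' : sorted ge z := path_sorted hs.
have hall : all (ge v) z := order_path_min ge_trans hs.
case/orP: hv => /eqP hv; rewrite hv in hall *.
- rewrite mul0r add0r dotW_zero; last first.
    apply/allP => u hu; have := allP hall u hu; have := allP hz u hu.
    move=> /orP[/eqP -> //|/eqP ->]; rewrite /ge /= ler10 //.
  have -> : count (pred1 1) z = 0%N.
    apply/eqP; rewrite -leqn0 leqNgt -has_count; apply/hasP => -[u hu /= /eqP hu1].
    by have := allP hall u hu; rewrite /ge /= hu1 ler10.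
  by rewrite /= eq_sym oner_eq0 big_ord0.
- by rewrite mul1r IH // /= eqxx add1n big_ord_recl.
Qed.

Lemma Lam_ind W (X : eqType) (r : seq X) (t : R) (P : pred X) :
  0 <= t -> Lam W r (fun x => t * (P x)%:R) = t * \sum_(k < count P r) W k.
Proof.
move=> ht.
rewrite (@Lam_sorted W X r (fun x => (P x)%:R) (fun v => t * v)); last first.
  by move=> a b hab; apply: ler_wpM2l.
rewrite dotW_map_scale; congr (_ * _).
rewrite dotW_01.
- have hp : perm_eq (sort (relpre (fun x => (P x)%:R) ge) r) r by rewrite perm_sort.
  rewrite count_map (@eq_count _ _ P); first by rewrite (seq.permP hp).
  by move=> x /=; case: (P x); rewrite /= ?eqxx // eq_sym oner_eq0.
- rewrite -sort_map; exact: sort_sorted ge_total _.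
- by apply/allP => v /mapP [x _ ->]; case: (P x); rewrite eqxx ?orbT.
Qed.

End Dot.
Arguments dotW {R}.
Arguments dotW_cat {R}.
Arguments dotW_sum {R}.
Arguments dotW_map_add {R}.
Arguments dotW_map_scale {R}.
Arguments dotW_map_le {R}.
Arguments dotW_ge0 {R}.
Arguments ge {R}.
Arguments ge_total {R}.
Arguments ge_trans {R}.
Arguments ge_anti {R}.
Arguments decr_le0 {R}.
Arguments rearr {R}.
Arguments dotW_le_sort {R}.
Arguments Lam {R} W {X} r f.
Arguments Lam_sorted {R}.
Arguments Lam_id {R}.
Arguments Lam_upper {R}.
Arguments Lam_eq_in {R}.
Arguments Lam_add {R}.
Arguments Lam_scale {R}.
Arguments Lam_mono {R}.
Arguments Lam_ge0 {R}.
Arguments dotW_zero {R}.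
Arguments Lam_zero {R}.
Arguments Lam_sum {R}.
Arguments Lam_split {R}.
Arguments dotW_01 {R}.
Arguments Lam_ind {R}.


Section Wq.
Variable R : realType.

Definition Wq (q : R) (k : nat) : R := k.+1%:R `^ q - k%:R `^ q.

Lemma Wq_ge0 q k : 0 <= q -> 0 <= Wq q k.
Proof.
move=> hq; rewrite /Wq subr_ge0; apply: ge0_ler_powR => //.
- by rewrite nnegrE.
- by rewrite nnegrE.
- by rewrite ler_nat.
Qed.

Lemma Wq_sum q n : q != 0 -> \sum_(k < n) Wq q k = n%:R `^ q.
Proof.
move=> hq; rewrite -(big_mkord xpredT) /Wq.
rewrite (telescope_sumr (fun k => k%:R `^ q)) // (_ : 0%:R = 0 :> R) //.
by rewrite powR0 // subr0.
Qed.

Lemma young2 (x y q : R) : 0 <= x -> 0 <= y -> 0 < q -> q < 1 ->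
  x `^ q * y `^ (1 - q) <= q * x + (1 - q) * y.
Proof.
move=> hx hy hq0 hq1.
have h1q : 0 < 1 - q by rewrite subr_gt0.
have := @conjugate_powR R (x `^ q) (y `^ (1 - q)) q^-1 (1 - q)^-1
  (powR_ge0 _ _) (powR_ge0 _ _) (eqbRL (invr_gt0 _) hq0) (eqbRL (invr_gt0 _) h1q).
have -> : (q^-1)^-1 + ((1 - q)^-1)^-1 = 1 by rewrite !invrK; ring.
move=> /(_ erefl).
rewrite -!powRrM !mulfV ?gt_eqF // !powRr1 // !invrK.
by rewrite (mulrC q) (mulrC (1 - q)).
Qed.

Lemma midconc (a b q : R) : 0 <= a -> 0 <= b -> 0 < q -> q <= 1 ->
  a `^ q + b `^ q <= 2 * ((a + b) / 2) `^ q.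
Proof.
move=> ha hb hq0 hq1.
case: (eqVneq q 1) => [->|hq1'].
  rewrite !powRr1 //; last by apply: divr_ge0 => //; apply: addr_ge0.
  by rewrite mulrC -mulrA mulVf ?mulr1.
have hq1s : q < 1 by rewrite lt_neqAle hq1' hq1.
set c := (a + b) / 2.
have hc0 : 0 <= c by apply: divr_ge0 => //; apply: addr_ge0.
case: (eqVneq c 0) => [hc|hc].
  have hab : a + b = 0 by move: hc; rewrite /c => /eqP; rewrite mulf_eq0 invr_eq0 pnatr_eq0 orbF => /eqP.
  have ha0 : a = 0 by lra.
  have hb0 : b = 0 by lra.
  by rewrite hc ha0 hb0 powR0 ?gt_eqF // addr0 mulr0.
have hcp : 0 < c by rewrite lt_neqAle eq_sym hc hc0.
have y1 := @young2 a c q ha hc0 hq0 hq1s.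
have y2 := @young2 b c q hb hc0 hq0 hq1s.
have hpos : 0 < c `^ (1 - q) by apply: powR_gt0.
rewrite -(ler_pM2r hpos) mulrDl -mulrA.
have -> : c `^ q * c `^ (1 - q) = c.
  rewrite -powRD; last by rewrite hc implybT.
  by rewrite addrC subrK powRr1.
have hab : a + b = 2 * c by rewrite /c; field.
nra.
Qed.

Lemma Wq_decr q k : 0 < q -> q <= 1 -> Wq q k.+1 <= Wq q k.
Proof.
move=> hq0 hq1; rewrite /Wq.
have := @midconc k%:R k.+2%:R q (ler0n _ _) (ler0n _ _) hq0 hq1.
have -> : (k%:R + k.+2%:R) / 2 = k.+1%:R :> R.
  have h1 : k.+1%:R = k%:R + 1 :> R by rewrite -addn1 natrD.
  have h2 : k.+2%:R = k%:R + 2 :> R by rewrite -addn2 natrD.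
  by rewrite h1 h2; field.
lra.
Qed.

Lemma sqrt_le_lin (u m : R) : 0 <= u -> 0 < m -> Num.sqrt u <= (m * u + m^-1) / 2.
Proof.
move=> hu hm.
set v := Num.sqrt u.
have hv : 0 <= v by apply: sqrtr_ge0.
have hv2 : v ^+ 2 = u by apply: sqr_sqrtr.
have h2m : 0 < 2 * m by apply: mulr_gt0.
rewrite -(ler_pM2r h2m).
have hm0 : m != 0 by rewrite gt_eqF.
have -> : (m * u + m^-1) / 2 * (2 * m) = m ^+ 2 * u + 1 by field.
rewrite -hv2.
have : 0 <= (m * v - 1) ^+ 2 by apply: sqr_ge0.
nra.
Qed.

Lemma powmean (m : nat) (M : nat -> R) (q : R) : (0 < m)%N -> 2^-1 <= q -> q <= 1 ->
  (forall s, 0 <= M s) ->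
  \sum_(s < m * m) M s `^ q <= m%:R * (\sum_(s < m * m) M s) `^ q.
Proof.
move=> hm hq12 hq1 hM.
have hq0 : 0 < q by apply: lt_le_trans hq12; rewrite invr_gt0.
set T := \sum_(s < m * m) M s.
have hT0 : 0 <= T by apply: sumr_ge0 => s _.
have hmR : 0 < m%:R :> R by rewrite ltr0n.
case: (eqVneq T 0) => [hT|hT].
  rewrite big1; first by apply: mulr_ge0; [apply: ltW | apply: powR_ge0].
  move=> s _; rewrite (@psumr_eq0P _ _ xpredT (fun s : 'I_(m * m) => M s)) //.
  by rewrite powR0 // gt_eqF.
have hTp : 0 < T by rewrite lt_neqAle eq_sym hT hT0.
have hMT : forall s : 'I_(m * m), M s <= T.
  move=> s; rewrite /T (bigD1 s) //= lerDl; by apply: sumr_ge0 => i _.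
apply: (@le_trans _ _ (\sum_(s < m * m) T `^ q * ((m%:R * (M s / T) + m%:R^-1) / 2))).
  apply: ler_sum => s _.
  have hu0 : 0 <= M s / T by apply: divr_ge0.
  have hu1 : M s / T <= 1 by rewrite ler_pdivrMr // mul1r.
  rewrite {1}(_ : M s = T * (M s / T)); last by field.
  rewrite (powRM _ hT0 hu0).
  apply: ler_wpM2l; first by apply: powR_ge0.
  apply: le_trans (@sqrt_le_lin (M s / T) m%:R hu0 hmR).
  case: (eqVneq (M s / T) 0) => [->|hu].
    by rewrite powR0 ?gt_eqF // sqrtr_ge0.
  rewrite -powR12_sqrt //.
  apply: ger_powR => //.
  by rewrite lt_neqAle eq_sym hu hu0 hu1.
rewrite -mulr_sumr mulrC; apply: ler_wpM2r; first by apply: powR_ge0.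
rewrite -mulr_suml big_split /= -mulr_sumr -mulr_suml sumr_const card_ord.
rewrite -/T mulfV ?gt_eqF // mulr1.
have -> : m%:R^-1 *+ (m * m) = m%:R :> R.
  rewrite (_ : m%:R^-1 *+ (m * m) = m%:R^-1 * (m%:R * m%:R)); last by rewrite -natrM mulr_natr.
  by rewrite mulrA mulVf ?mul1r // gt_eqF.
lra.
Qed.

End Wq.
Arguments Wq {R}.
Arguments Wq_ge0 {R}.
Arguments Wq_sum {R}.
Arguments young2 {R}.
Arguments midconc {R}.
Arguments Wq_decr {R}.
Arguments sqrt_le_lin {R}.
Arguments powmean {R}.


Set Implicit Arguments.

Section Comb.
Variables (m n : nat).
Local Notation M := (Mind m n).

Definition ordle : rel 'I_n := relpre (@nat_of_ord n) leq.
Definition rep (i : M) : M := sort_tuple ordle i.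

Lemma rep_val (i : M) : map val (val (rep i)) = sort leq (map val (val i)).
Proof. by rewrite /rep /= sort_map. Qed.

Lemma rep_J i : in_J (rep i).
Proof. by rewrite /in_J rep_val; apply: sort_sorted; exact: leq_total. Qed.

Lemma in_eqclass (i j : M) : (j \in eqclass i) = perm_eq (val j) (val i).
Proof. by rewrite /eqclass inE. Qed.

Lemma eqclass_sym (i j : M) : (j \in eqclass i) = (i \in eqclass j).
Proof. by rewrite !in_eqclass perm_sym. Qed.

Lemma rep_in i : rep i \in eqclass i.
Proof. by rewrite in_eqclass /rep /= perm_sort. Qed.

Lemma rep_uniq (i j : M) : in_J j -> i \in eqclass j -> rep i = j.
Proof.
move=> hj hi; apply: val_inj; apply: (inj_map val_inj).
rewrite rep_val; apply: (sorted_eq leq_trans anti_leq).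
- by apply: sort_sorted; exact: leq_total.
- exact: hj.
- rewrite perm_sort; apply: perm_map; by rewrite -in_eqclass.
Qed.

Lemma self_in (j : M) : j \in eqclass j.
Proof. by rewrite in_eqclass. Qed.

Lemma fact_le_pow k : (k`! <= k ^ k)%N.
Proof.
elim: k => [|k IH] //.
rewrite factS expnS leq_mul2l; apply/orP; right.
apply: leq_trans IH _; case: k => [|k] //.
by rewrite leq_exp2r.
Qed.

Lemma card_eqclass (j : M) : (#|eqclass j| <= m`!)%N.
Proof.
pose f := fun p : {perm 'I_m} => ([tuple tnth j (p i) | i < m] : M).
have sub : eqclass j \subset f @: [set: {perm 'I_m}].
  apply/fintype.subsetP => i; rewrite in_eqclass => /tuple_permP [p hp].
  apply/imsetP; exists p; first by rewrite inE.
  by apply: val_inj; rewrite hp.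
apply: leq_trans (subset_leq_card sub) _; apply: leq_trans (leq_imset_card _ _) _.
by rewrite cardsE card_Sn.
Qed.

Lemma card_pos (j : M) : (0 < #|eqclass j|)%N.
Proof. by apply/card_gt0P; exists j; exact: self_in. Qed.

Lemma card_lt (j : M) : (0 < m)%N -> (#|eqclass j| < 2 ^ (m * m))%N.
Proof.
move=> hm; apply: leq_ltn_trans (card_eqclass j) _.
apply: leq_ltn_trans (fact_le_pow m) _.
by rewrite expnM ltn_exp2r // ltn_expl.
Qed.

Definition band (j : M) := trunc_log 2 #|eqclass j|.

Lemma band_lt (j : M) : (0 < m)%N -> (band j < m * m)%N.
Proof.
move=> hm; rewrite ltnNge; apply/negP => h.
have h1 := trunc_logP (isT : (1 < 2)%N) (card_pos j).
have h2 := card_lt j hm.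
have h3 : (2 ^ (m * m) <= 2 ^ band j)%N by rewrite leq_exp2l.
rewrite /band in h3; lia.
Qed.

Lemma band_le (j : M) : (2 ^ band j <= #|eqclass j|)%N.
Proof. exact: trunc_logP (isT : (1 < 2)%N) (card_pos j). Qed.

Lemma band_gt (j : M) : (#|eqclass j| < 2 ^ (band j).+1)%N.
Proof. exact: trunc_log_ltn. Qed.

Definition rJ : seq M := [seq j <- enum M | in_J j].

Lemma rep_rJ (i : M) : rep i \in rJ.
Proof. by rewrite mem_filter rep_J mem_enum. Qed.

Lemma count_classes (P : pred M) : (forall i j, j \in eqclass i -> P i = P j) ->
  count P (enum M) = (\sum_(j <- rJ | P j) #|eqclass j|)%N.
Proof.
move=> hP.
rewrite /rJ big_filter_cond -sum1_count !big_enum_cond.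
under [RHS]eq_bigr do rewrite -sum1_card.
rewrite (exchange_big_dep xpredT) //=.
rewrite [LHS]big_mkcond /=.
apply: eq_bigr => i _.
rewrite sum1dep_card.
case hPi: (P i); symmetry.
  rewrite (_ : [set x | _] = [set rep i]) ?cards1 //; apply/setP => j; rewrite !inE.
  apply/idP/idP.
    move=> /andP[/andP[hj _] hij]; apply/eqP; symmetry.
    by apply: (@rep_uniq i j hj); rewrite in_eqclass.
  move=> /eqP ->; rewrite rep_J /=.
  rewrite -(hP _ _ (rep_in i)) hPi /= -in_eqclass eqclass_sym; exact: rep_in.
rewrite (_ : [set x | _] = finset.set0) ?cards0 //; apply/setP => j; rewrite !inE.
apply/negP => /andP[/andP[_ hPj] hij].
rewrite -in_eqclass eqclass_sym in hij.
by rewrite (hP _ _ hij) hPj in hPi.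
Qed.

End Comb.

Section Core.
Variables (R : realType) (m n : nat) (q : R).
Hypothesis hm : (0 < m)%N.
Hypothesis hq12 : 2^-1 <= q.
Hypothesis hq1 : q <= 1.
Local Notation M := (Mind m n).
Local Notation W := (@Wq R q).

Definition cc (j : M) : R := #|eqclass j|%:R.

Lemma hq0 : 0 < q.
Proof. by apply: lt_le_trans hq12; rewrite invr_gt0. Qed.

Lemma Wdec k : W k.+1 <= W k.
Proof. exact: Wq_decr hq0 hq1. Qed.

Lemma Wge0 k : 0 <= W k.
Proof. apply: Wq_ge0; exact: ltW hq0. Qed.

Lemma sum_band (j : M) (x : R) : \sum_(s < m * m) ((band j == s)%:R * x) = x.
Proof.
rewrite (bigD1 (Ordinal (band_lt j hm))) //= eqxx mul1r big1 ?addr0 // => s hs.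
rewrite (_ : (band j == s) = false) ?mul0r //.
apply/negbTE; apply: contra hs => /eqP e; apply/eqP; apply: val_inj; by rewrite /= e.
Qed.

Lemma cc_ge0 (j : M) : 0 <= cc j.
Proof. exact: ler0n. Qed.

Lemma core (A : pred M) :
  Lam W (rJ m n) (fun j => cc j `^ q * (A j)%:R)
    <= 2 * m%:R * (\sum_(j <- rJ m n | A j) cc j) `^ q.
Proof.
pose h := fun (s : nat) (j : M) => cc j `^ q * ((A j && (band j == s))%:R).
have step1 : Lam W (rJ m n) (fun j => cc j `^ q * (A j)%:R)
    = Lam W (rJ m n) (fun j => \sum_(s < m * m) h s j).
  apply: Lam_eq_in => j _; rewrite /h; case: (A j) => /=.
    rewrite mulr1; symmetry; under eq_bigr do rewrite mulrC; exact: sum_band.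
  by rewrite mulr0 big1 // => s _; rewrite mulr0.
rewrite step1; apply: le_trans (@Lam_sum R W _ (rJ m n) (m * m) h Wdec) _.
pose Ms := fun s : nat => \sum_(j <- rJ m n | A j) (band j == s)%:R * cc j.
have hMs0 : forall s, 0 <= Ms s.
  by move=> s; apply: sumr_ge0 => j _; apply: mulr_ge0 => //; apply: cc_ge0.
apply: (@le_trans _ _ (\sum_(s < m * m) 2 * Ms s `^ q)).
  apply: ler_sum => s _.
  apply: (@le_trans _ _ (Lam W (rJ m n)
     (fun j => (2 ^ s.+1)%:R `^ q * ((A j && (band j == s))%:R)))).
    apply: Lam_mono; [exact: Wdec | exact: Wge0 | move=> j].
    rewrite /h; case: andP => [[_ /eqP hb]|_]; last by rewrite !mulr0.
    rewrite !mulr1; apply: ge0_ler_powR; first exact: ltW hq0.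
    - by rewrite nnegrE cc_ge0.
    - by rewrite nnegrE ler0n.
    - by rewrite /cc ler_nat -hb ltnW // band_gt.
  rewrite Lam_ind ?powR_ge0 // Wq_sum ?gt_eqF ?hq0 //.
  rewrite -powRM ?ler0n //.
  have hcount : (count (fun j => A j && (band j == s)) (rJ m n))%:R
      = \sum_(j <- rJ m n | A j) (band j == s)%:R :> R.
    rewrite -sum1_count big_mkcondr natr_sum; apply: eq_bigr => j _.
    by case: (band j == s).
  have hN : (2 ^ s.+1)%:R * (count (fun j => A j && (band j == s)) (rJ m n))%:R
      <= 2 * Ms s.
    rewrite hcount expnS natrM -mulrA; apply: ler_wpM2l => //.
    rewrite mulr_sumr; apply: ler_sum => j _.
    case hb: (band j == s); last by rewrite !mulr0 mul0r.
    rewrite mulr1 mul1r /cc ler_nat -(eqP hb); exact: band_le.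
  apply: le_trans (ge0_ler_powR (ltW hq0) _ _ hN) _.
  - by rewrite nnegrE; apply: mulr_ge0; apply: ler0n.
  - by rewrite nnegrE; apply: mulr_ge0.
  rewrite powRM //; apply: ler_wpM2r; first exact: powR_ge0.
  by apply: ler1_powR hq1; rewrite ler1n.
rewrite (_ : \sum_(s < m * m) 2 * Ms s `^ q = 2 * \sum_(s < m * m) Ms s `^ q);
  last by rewrite mulr_sumr.
rewrite -mulrA ler_wpM2l //.
have -> : \sum_(j <- rJ m n | A j) cc j = \sum_(s < m * m) Ms s.
  rewrite /Ms exchange_big /=; apply: eq_bigr => j _; by rewrite sum_band.
exact: powmean.
Qed.

End Core.


Set Implicit Arguments.

Section Aux.
Variable R : realType.

Lemma seq_min (X : eqType) (g : X -> R) (P : pred X) (s : seq X) :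
  has P s -> exists x, [/\ x \in s, P x & forall y, y \in s -> P y -> g x <= g y].
Proof.
elim: s => [|a s IH] //= hh.
case hs: (has P s).
  have [x [hx hPx hmin]] := IH hs.
  case hPa: (P a).
    case: (leP (g a) (g x)) => h.
      exists a; split; rewrite ?mem_head //.
      move=> y; rewrite inE => /orP[/eqP ->|hy] hPy //.
      exact: le_trans h (hmin y hy hPy).
    exists x; split; rewrite ?inE ?hx ?orbT //.
    move=> y; rewrite inE => /orP[/eqP ->|hy] hPy; [exact: ltW | exact: hmin].
  exists x; split; rewrite ?inE ?hx ?orbT //.
  move=> y; rewrite inE => /orP[/eqP ->|hy] hPy; [by rewrite hPa in hPy | exact: hmin].
have hPa : P a by move: hh; rewrite hs orbF.
exists a; split; rewrite ?mem_head //.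
move=> y; rewrite inE => /orP[/eqP ->|hy] hPy //.
by move/hasPn: hs => /(_ y hy); rewrite hPy.
Qed.

Lemma count_lt (X : eqType) (a b : pred X) (s : seq X) x :
  (forall y, a y -> b y) -> x \in s -> b x -> ~~ a x -> (count a s < count b s)%N.
Proof.
move=> hab hx hb ha.
have e : count b s = (count a s + count (fun y => b y && ~~ a y) s)%N.
  elim: s {hx} => //= y s ->.
  case ha': (a y); case hb': (b y) => /=; try lia.
  by have := hab y ha'; rewrite hb'.
have : has (fun y => b y && ~~ a y) s by apply/hasP; exists x => //; rewrite hb ha.
rewrite has_count; lia.
Qed.

Lemma maxmin (x t : R) : Num.max (x - t) 0 + Num.min x t = x.
Proof. rewrite maxEle minEle; case: ifP => h1; case: ifP => h2; lra. Qed.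

Lemma homo_max (t : R) : {homo (fun x : R => Num.max (x - t) 0) : x y / x <= y}.
Proof.
move=> x y hxy /=; rewrite ge_max; apply/andP; split; rewrite le_max; apply/orP.
  by left; lra.
by right.
Qed.

Lemma homo_min (t : R) : {homo (fun x : R => Num.min x t) : x y / x <= y}.
Proof.
move=> x y hxy /=; rewrite le_min; apply/andP; split; rewrite ge_min; apply/orP.
  by left.
by right.
Qed.

End Aux.

Section Main.
Variables (R : realType) (m n : nat) (q : R).
Hypothesis hm : (0 < m)%N.
Hypothesis hq12 : 2^-1 <= q.
Hypothesis hq1 : q <= 1.
Local Notation M := (Mind m n).
Local Notation W := (@Wq R q).
Local Notation cc := (@cc R m n).

Lemma main_ind N : forall g : M -> R, (forall i, 0 <= g i) ->
  (forall i j, j \in eqclass i -> g i = g j) ->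
  (count (fun j => (0 < g j)%R) (rJ m n) <= N)%N ->
  Lam W (rJ m n) (fun j => cc j `^ q * g j) <= 2 * m%:R * Lam W (enum M) g.
Proof.
have hq0' := @hq0 R q hq12.
have hW := @Wdec R q hq12 hq1.
have hW0 := @Wge0 R q hq12.
elim: N => [|N IH] g hg hs hc.
  have hz : forall j, j \in rJ m n -> g j = 0.
    move=> j hj.
    have : ~~ has (fun j => (0 < g j)%R) (rJ m n) by rewrite has_count -leqNgt.
    move=> /hasPn /(_ j hj) /=.
    by rewrite lt_neqAle hg andbT negbK => /eqP <-.
  rewrite (@Lam_eq_in R W _ (rJ m n) _ (fun _ => 0)); last first.
    by move=> j hj; rewrite hz // mulr0.
  rewrite Lam_zero; apply: mulr_ge0; first by apply: mulr_ge0 => //; apply: ler0n.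
  exact: Lam_ge0.
case: (leqP (count (fun j => (0 < g j)%R) (rJ m n)) N) => hcN; first exact: IH.
have hpos : has (fun j => (0 < g j)%R) (rJ m n) by rewrite has_count; lia.
have [j0 [hj0 hg0 hmin]] := @seq_min R _ g _ _ hpos.
set t := g j0.
have ht0 : 0 < t by [].
have ht : forall i, 0 < g i -> t <= g i.
  move=> i hi; have e : g i = g (rep i) := hs i (rep i) (rep_in i).
  by rewrite e; apply: hmin; rewrite ?rep_rJ // -e.
pose g' := fun i => Num.max (g i - t) 0.
pose gm := fun i => Num.min (g i) t.
have hsplit : forall i, g i = g' i + gm i by move=> i; rewrite maxmin.
have hgm : forall i, gm i = t * ((0 < g i)%R)%:R.
  move=> i; rewrite /gm; case hgi: (0 < g i).
    by rewrite mulr1 minEle; case: ifP => // h; apply/eqP; rewrite eq_le h ht.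
  have -> : g i = 0.
    by move: hgi; rewrite lt_neqAle hg andbT => /negbFE /eqP <-.
  by rewrite mulr0 minEle ltW.
have hg' : forall i, 0 <= g' i by move=> i; rewrite /g' le_max lexx orbT.
have hs' : forall i j, j \in eqclass i -> g' i = g' j.
  by move=> i j h; rewrite /g' (hs i j h).
have hc' : (count (fun j => (0 < g' j)%R) (rJ m n) <= N)%N.
  have : (count (fun j => (0 < g' j)%R) (rJ m n) < count (fun j => (0 < g j)%R) (rJ m n))%N.
    apply: (@count_lt _ _ _ _ j0) => //.
    - move=> y /=; rewrite /g' lt_max ltxx orbF => h; lra.
    - by rewrite /= /g' /t subrr maxxx ltxx.
  have : (count (fun j => (0 < g j)%R) (rJ m n) <= N.+1)%N by exact: hc.
  lia.
set C := \sum_(j <- rJ m n | 0 < g j) cc j.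
have hJm : Lam W (rJ m n) (fun j => cc j `^ q * gm j) <= t * (2 * m%:R * C `^ q).
  rewrite (@Lam_eq_in R W _ (rJ m n) _ (fun j => t * (cc j `^ q * ((0 < g j)%R)%:R))); last first.
    by move=> j _; rewrite hgm; ring.
  apply: le_trans (@Lam_scale R W _ (rJ m n) t (fun j => cc j `^ q * ((0 < g j)%R)%:R) hW (ltW ht0)) _.
  apply: ler_wpM2l; first exact: ltW.
  exact: (@core R m n q hm hq12 hq1 (fun j => (0 < g j)%R)).
have hM : Lam W (enum M) g = Lam W (enum M) g' + t * C `^ q.
  rewrite (@Lam_split R W _ (enum M) g _ _ (@homo_max R t) (@homo_min R t) (fun x => @maxmin R x t)).
  congr (_ + _).
  rewrite (@Lam_eq_in R W _ (enum M) _ (fun i => t * ((0 < g i)%R)%:R)); last first.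
    by move=> i _; rewrite -hgm.
  rewrite Lam_ind; last exact: ltW.
  rewrite Wq_sum; last by rewrite gt_eqF.
  rewrite count_classes; last by move=> i j h; rewrite (hs i j h).
  by rewrite natr_sum.
apply: (@le_trans _ _ (Lam W (rJ m n) (fun j => cc j `^ q * g' j)
                      + Lam W (rJ m n) (fun j => cc j `^ q * gm j))).
  rewrite (@Lam_eq_in R W _ (rJ m n) (fun j => cc j `^ q * g j)
     (fun j => cc j `^ q * g' j + cc j `^ q * gm j)); last first.
    by move=> j _; rewrite {1}(hsplit j) mulrDr.
  exact: Lam_add.
apply: le_trans (lerD (IH g' hg' hs' hc') hJm) _.
rewrite hM le_eqVlt; apply/orP; left; apply/eqP; ring.
Qed.

End Main.


Unset Implicit Arguments.

Theorem lemma5p4 (R : realType) :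
  exists L : R, 0 < L /\
    forall (m n : nat), (0 < m)%N ->
    forall a : Mind m n -> R[i], symmetric_mat a ->
      normDJ ((2 * m)%:R / (m.+1)%:R) a
        <= L * m%:R * normM ((2 * m)%:R / (m.+1)%:R) a.
Proof.
exists 2; split => // m n hm a ha.
have hmR : 0 < m%:R :> R by rewrite ltr0n.
have e2m : (2 * m)%:R = 2 * m%:R :> R by rewrite natrM.
have em1 : (m.+1)%:R = m%:R + 1 :> R by rewrite -addn1 natrD.
have hpq : ((2 * m)%:R / (m.+1)%:R)^-1 = (m.+1)%:R / (2 * m)%:R :> R by rewrite invf_div.
have hq12 : 2^-1 <= (m.+1)%:R / (2 * m)%:R :> R.
  rewrite ler_pdivlMr; last by rewrite e2m mulr_gt0.
  rewrite e2m em1 mulrA mulVf ?mul1r; last by rewrite pnatr_eq0.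
  lra.
have hq1 : (m.+1)%:R / (2 * m)%:R <= 1 :> R.
  rewrite ler_pdivrMr; last by rewrite e2m mulr_gt0.
  rewrite mul1r e2m em1.
  have : 1 <= m%:R :> R by rewrite ler1n.
  lra.
have lor : forall s : seq R, lorentz_p1 ((2 * m)%:R / (m.+1)%:R) s
    = dotW (Wq ((m.+1)%:R / (2 * m)%:R)) (sort ge s).
  by move=> s; rewrite /lorentz_p1 /decr_rearr /= hpq -dotW_sum.
rewrite /normDJ /normM !lor.
have hg : forall i : Mind m n, 0 <= cmod (a i).
  by move=> i; rewrite /cmod normc_def /= sqrtr_ge0.
have hs : forall i j : Mind m n, j \in eqclass i -> cmod (a i) = cmod (a j).
  by move=> i j h; rewrite (ha i j h).
exact: (@main_ind R m n _ hm hq12 hq1 _ (fun i => cmod (a i)) hg hs (leqnn _)).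
Qed.
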